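(* Let $p$ be an odd prime and $\sim$ a nontrivial equivalence relation on $\mathbb{Z}_p^\times$ such that $x \sim y$ and $x \neq y$ imply $(y-x) \sim (-x)$. Let $S$ be the union of some equivalence class with $\{0\}$. If $x,y$ and $z,w$ are two pairs of distinct elements of $S$ (i.e. $x \neq y$, $z\neq w$) with $x - y = z - w$, then $x = z$ and $y = w$. In other words, $S$ is a modular Golomb ruler.
   Context: A subset $S \subseteq \mathbb{Z}_p$ is a modular Golomb ruler if $0 \in S$ and for any $x\neq y$ and $z \neq w$ in $S$ with $x-y=z-w$ we have $x=z$ and $y=w$. An equivalence relation is nontrivial if it has at least two classes. *)

(* Defs.v *)
From HB Require Import structures.
From mathcomp Require Import all_boot all_order all_algebra.
Set Implicit Arguments. Unset Strict Implicit. Unset Printing Implicit Defensive.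
Import GRing.Theory.
Local Open Scope ring_scope.

Definition modular_golomb_ruler (p : nat) (S : {set 'F_p}) : Prop :=
  (0 \in S) /\
  forall x y z w, x \in S -> y \in S -> z \in S -> w \in S ->
    x != y -> z != w -> x - y = z - w -> x = z /\ y = w.

(* An equivalence relation on Z_p^x, encoded as a relation on Z_p supported
   on the nonzero elements. *)
Definition equiv_on_units (p : nat) (R : rel 'F_p) : Prop :=
  [/\ forall x y, R x y -> (x != 0) && (y != 0),
      forall x, x != 0 -> R x x,
      forall x y, R x y -> R y x &
      forall x y z, R x y -> R y z -> R x z].

Definition nontrivial_on_units (p : nat) (R : rel 'F_p) : Prop :=
  exists x y : 'F_p, [/\ x != 0, y != 0 & ~~ R x y].

(* Main.v *)
Require Import Defs.
From mathcomp Require Import all_boot all_order all_algebra.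
From mathcomp Require Import ring.
Import GRing.Theory.
Local Open Scope ring_scope.

Lemma lin_eq {V : zmodType} (a b u v : V) : a = b -> u - v = a - b -> u = v.
Proof. by move=> ->; rewrite subrr => /eqP; rewrite subr_eq0 => /eqP. Qed.

Ltac lin U V e := first [ apply: (@lin_eq _ _ _ U V e); ring
  | apply: (@lin_eq _ _ _ U V (esym e)); ring ].

Theorem corollary3p21 (p : nat) (R : rel 'F_p) (a : 'F_p) :
  prime p -> odd p ->
  equiv_on_units R ->
  nontrivial_on_units R ->
  (forall x y, R x y -> x != y -> R (y - x) (- x)) ->
  a != 0 ->
  modular_golomb_ruler (0 |: [set x | R a x]).
Proof.
move=> pp op [Rnz Rref Rsym Rtr] [b [c [b0 c0 nbc]]] H a0.
have Cnz : forall u, R a u -> u != 0 by move=> u /Rnz/andP[].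
have ltp : forall y : 'F_p, (val y < p)%N.
  by move=> [m]; rewrite /= Fp_cast.
have natE : forall y : 'F_p, y = (val y)%:R.
  by move=> y; apply: val_inj; rewrite /= (val_Fp_nat pp) modn_small // ltp.
have kneq : forall k, (0 < k < p)%N -> (k%:R : 'F_p) != 0.
  move=> k /andP[k0 kp]; rewrite -(dvdn_pcharf (pchar_Fp pp)).
  by apply/negP => /(dvdn_leq k0); rewrite leqNgt kp.
have L1 : forall u, R a u -> R a (-u) -> False.
  move=> u au amu; have u0 := Cnz _ au.
  have uu : R u (-u) by apply: Rtr (Rsym _ _ au) amu.
  have key : forall k, (0 < k < p)%N -> R u (k%:R * u) /\ R u (-(k%:R * u)).
    elim => [|k IH] //; case: k IH => [|k] IH.
      by move=> _; rewrite mul1r; split => //; apply: Rref.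
    move=> /andP[_ kp].
    have [IH1 IH2] := IH (ltnW kp).
    have ne : k.+1%:R * u != - u.
      apply/negP => /eqP E.
      have : k.+2%:R * u = 0.
        by rewrite mulrS mulrDl E mul1r addrN.
      move/eqP; rewrite mulf_eq0 (negbTE u0) orbF.
      by rewrite (negbTE (kneq _ _)) // kp.
    split.
      have h := H _ _ (Rtr _ _ _ (Rsym _ _ IH2) (Rref _ u0)).
      have : R (u - - (k.+1%:R * u)) (- - (k.+1%:R * u)).
        apply: h; apply: contra ne => /eqP E; by rewrite -[in X in _ == X]E opprK.
      have -> : u - - (k.+1%:R * u) = k.+2%:R * u.
        by ring.
      rewrite opprK => h2.
      exact: Rtr IH1 (Rsym _ _ h2).
    have h := H _ _ (Rtr _ _ _ (Rsym _ _ IH1) uu) ne.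
    have -> : - (k.+2%:R * u) = - u - k.+1%:R * u.
      by ring.
    exact: Rtr IH2 (Rsym _ _ h).
  have all : forall y, y != 0 -> R u y.
    move=> y y0.
    have e : y = (val (y / u))%:R * u by rewrite -natE divfK.
    have k0 : (0 < val (y / u))%N.
      rewrite lt0n; apply/negP => /eqP E.
      by move: y0; rewrite e E mul0r eqxx.
    by rewrite e; case: (key (val (y / u))) => //; rewrite k0 ltp.
  by move/negP: nbc; apply; apply: Rtr (Rsym _ _ (all _ b0)) (all _ c0).
split; first by rewrite !inE eqxx.
have Hp : forall u v, R a u -> R a v -> u != v -> R (v - u) (- u).
  by move=> u v au av; apply: H; apply: Rtr (Rsym _ _ au) av.
have L2 : forall u v, R a u -> R a v -> R v (- u) -> False.
  by move=> u v au av vu; apply: (L1 u au); apply: Rtr av vu.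
move=> x y z w; rewrite !inE.
case/orP=> [/eqP->|ax]; case/orP=> [/eqP->|ay]; case/orP=> [/eqP->|az];
  case/orP=> [/eqP->|aw]; move=> nxy nzw e.
all: try by rewrite eqxx in nxy.
all: try by rewrite eqxx in nzw.
- by split => //; lin y w e.
- exfalso; have E : z = - y by lin (z) (- y) e.
  by apply: (L2 y z ay az); rewrite -E; apply: Rref; apply: Cnz.
- exfalso; have E : y = w - z by lin (y) (w - z) e.
  by apply: (L2 z y az ay); rewrite E; apply: Hp.
- exfalso; have E : x = - w by lin (x) (- w) e.
  by apply: (L2 w x aw ax); rewrite -E; apply: Rref; apply: Cnz.
- by split => //; lin x z e.
- exfalso; have E : x = z - w by lin (x) (z - w) e.
  by apply: (L2 w x aw ax); rewrite E; apply: Hp => //; rewrite eq_sym.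
- exfalso; have E : w = y - x by lin (w) (y - x) e.
  by apply: (L2 x w ax aw); rewrite E; apply: Hp.
- exfalso; have E : z = x - y by lin (z) (x - y) e.
  by apply: (L2 y z ay az); rewrite E; apply: Hp => //; rewrite eq_sym.
- have [xz|xz] := eqVneq x z.
    by split => //; subst z; lin y w e.
  exfalso.
  have yw : y != w.
    by apply: contra xz => /eqP yw; subst w; apply/eqP; lin x z e.
  have h1 := Hp _ _ ax ay nxy.
  have h2 := Hp _ _ az aw nzw.
  have E1 : w - z = y - x by lin (w - z) (y - x) e.
  rewrite E1 in h2.
  have h3 := Hp _ _ ax az xz.
  have h4 := Hp _ _ ay aw yw.
  have E2 : w - y = z - x by lin (w - y) (z - x) e.
  rewrite E2 in h4.
  have mxy : R (- x) (- y) by apply: Rtr (Rsym _ _ h3) h4.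
  have nmxy : - x != - y by rewrite (inj_eq oppr_inj).
  have h5 := H _ _ mxy nmxy.
  have E3 : - y - - x = x - y by ring.
  rewrite E3 opprK in h5.
  have yx : y != x by rewrite eq_sym.
  have h6 := Hp _ _ ay ax yx.
  apply: (L2 x x ax ax).
  exact: Rtr (Rsym _ _ h5) (Rtr _ _ _ h6 (Rsym _ _ mxy)).
Qed.
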